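(* Let $b,c\in Z^{10}$ with $\sum_i b_i=\sum_i c_i=0$, and assume $t\nmid B_i$ and $t\nmid C_i$ for all odd $i$. Let $l$ be odd such that $t\mid B_l+B_{l+2}$ and $t\nmid B_i+B_{i+2}$ for all odd $i\neq l$, and likewise $t\mid C_l+C_{l+2}$ and $t\nmid C_i+C_{i+2}$ for all odd $i\neq l$ (indices mod $10$). Then $\mathbb{M}(b)\cong\mathbb{M}(c)$ as $B_{5,10}$-modules if and only if $$t\mid (B_{l-2}+B_l)\,C_l\,B_{l+4}\,C_{l+6}-(C_{l-2}+C_l)\,B_l\,C_{l+4}\,B_{l+6}.$$
   Context: Let $Z=\mathbb{C}[[t]]$. Let $\Gamma_{10}$ be the quiver with vertices $0,1,\dots,9$ (indices taken mod $10$) on a cycle and arrows $x_i\colon i-1\to i$, $y_i\colon i\to i-1$ for $i=1,\dots,10$. Let $B_{5,10}$ be the completed path algebra of $\Gamma_{10}$ modulo the closed ideal generated by $xy=yx$ and $x^5=y^5$ at every vertex. For $b=(b_1,\dots,b_{10})\in Z^{10}$ with $\sum_i b_i=0$, the $B_{5,10}$-module $\mathbb{M}(b)$ has $V_i=Z\oplus Z$ at every vertex, and for odd $j$: $x_j=\begin{pmatrix} t& b_j\\ 0&1\end{pmatrix}$, $y_j=\begin{pmatrix} 1&-b_j\\0&t\end{pmatrix}$; for even $j$: $x_j=\begin{pmatrix}1&b_j\\0&t\end{pmatrix}$, $y_j=\begin{pmatrix}t&-b_j\\0&1\end{pmatrix}$. An isomorphism $\mathbb{M}(b)\to\mathbb{M}(c)$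 is a family of invertible $Z$-linear maps $\varphi_i\colon Z^2\to Z^2$ commuting with all $x_i$ and $y_i$. For odd $i$ write $B_i=b_i+b_{i+1}$ and $C_i=c_i+c_{i+1}$ (indices mod $10$). *)

(* Defs.v *)
From HB Require Import structures.
From mathcomp Require Import all_boot all_algebra.
From mathcomp Require Import boolp complex Rstruct.

Set Implicit Arguments.
Unset Strict Implicit.
Unset Printing Implicit Defensive.

Import GRing.Theory.
Local Open Scope ring_scope.

Definition CC : fieldType := Rdefinitions.R[i].

Record fps : Type := FPS { coef : nat -> CC }.

HB.instance Definition _ := gen_eqMixin fps.
HB.instance Definition _ := gen_choiceMixin fps.

Lemma fpsP (f g : fps) : (forall n, coef f n = coef g n) -> f = g.
Proof.
by case: f g => f [g] /= H; congr FPS; apply: funext.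
Qed.

Definition fps0 : fps := FPS (fun _ => 0).
Definition fps_opp (f : fps) : fps := FPS (fun n => - coef f n).
Definition fps_add (f g : fps) : fps := FPS (fun n => coef f n + coef g n).

Fact fps_addA : associative fps_add.
Proof. by move=> f g h; apply: fpsP => n /=; rewrite addrA. Qed.
Fact fps_addC : commutative fps_add.
Proof. by move=> f g; apply: fpsP => n /=; rewrite addrC. Qed.
Fact fps_add0 : left_id fps0 fps_add.
Proof. by move=> f; apply: fpsP => n /=; rewrite add0r. Qed.
Fact fps_addN : left_inverse fps0 fps_opp fps_add.
Proof. by move=> f; apply: fpsP => n /=; rewrite addNr. Qed.

HB.instance Definition _ :=
  GRing.isZmodule.Build fps fps_addA fps_addC fps_add0 fps_addN.

Definition fps_mul (f g : fps) : fps :=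
  FPS (fun n => \sum_(j < n.+1) coef f j * coef g (n - j)).
Definition fps1 : fps := FPS (fun n => (n == 0%N)%:R).

Lemma coef_mul_rev (f g : fps) n :
  coef (fps_mul f g) n = \sum_(j < n.+1) coef f (n - j) * coef g j.
Proof.
rewrite /= (reindex_inj rev_ord_inj) /=; apply: eq_bigr => j _.
by rewrite subSS subKn // -ltnS.
Qed.

Lemma coef_mul (f g : fps) n :
  coef (fps_mul f g) n = \sum_(j < n.+1) coef f j * coef g (n - j).
Proof. by []. Qed.

Fact fps_mulA : associative fps_mul.
Proof.
move=> p q r; apply: fpsP => i; rewrite coef_mul [in RHS]coef_mul_rev.
pose coef3 j k := coef p j * (coef q (i - j - k) * coef r k).
transitivity (\sum_(j < i.+1) \sum_(k < i.+1 | (k <= i - j)%N) coef3 j k).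
  apply: eq_bigr => j _; rewrite coef_mul_rev big_distrr /=.
  by rewrite (big_ord_narrow_leq (leq_subr _ _)).
rewrite (exchange_big_dep predT) //=; apply: eq_bigr => k _.
transitivity (\sum_(j < i.+1 | (j <= i - k)%N) coef3 j k).
  apply: eq_bigl => j; rewrite -ltnS -(ltnS j) -!subSn ?leq_ord //.
  by rewrite -subn_gt0 -(subn_gt0 j) -!subnDA addnC.
rewrite (big_ord_narrow_leq (leq_subr _ _)) big_distrl /=.
by apply: eq_bigr => j _; rewrite /coef3 -!subnDA addnC mulrA.
Qed.

Fact fps_mulC : commutative fps_mul.
Proof.
move=> f g; apply: fpsP => n; rewrite coef_mul_rev /=.
by apply: eq_bigr => j _; rewrite mulrC.
Qed.

Fact fps_mul1 : left_id fps1 fps_mul.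
Proof.
move=> f; apply: fpsP => n /=; rewrite big_ord_recl /= mul1r subn0.
by rewrite big1 ?addr0 // => j _; rewrite mul0r.
Qed.

Fact fps_mulDl : left_distributive fps_mul fps_add.
Proof.
move=> f g h; apply: fpsP => n /=; rewrite -big_split /=.
by apply: eq_bigr => j _; rewrite mulrDl.
Qed.

Fact fps1_neq0 : fps1 != fps0.
Proof.
apply/eqP => /(congr1 (fun f => coef f 0)) /= /eqP; by rewrite oner_eq0.
Qed.

HB.instance Definition _ :=
  GRing.Zmodule_isComNzRing.Build fps fps_mulA fps_mulC fps_mul1 fps_mulDl
    fps1_neq0.

Notation Z := fps.
Definition t : Z := FPS (fun n => (n == 1%N)%:R).

Definition tdvd (f : Z) : Prop := exists g : Z, f = t * g.

Definition mx22 (a b c d : Z) : 'M[Z]_2 :=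
  \matrix_(i < 2, j < 2)
    if i == 0 then (if j == 0 then a else b) else (if j == 0 then c else d).

(* Vertices and arrows of Gamma_10 are indexed by 'I_10 (integers mod 10);
   the arrow index j in 'I_10 stands for the arrow number j in 1..10
   (with 10 represented by 0); x_j : j-1 -> j and y_j : j -> j-1.
   Parity is well defined mod 10. A vector b in Z^10 is b : 'I_10 -> Z with
   b_j = b (j mod 10). *)
Definition xmat (b : 'I_10 -> Z) (j : 'I_10) : 'M[Z]_2 :=
  if odd j then mx22 t (b j) 0 1 else mx22 1 (b j) 0 t.
Definition ymat (b : 'I_10 -> Z) (j : 'I_10) : 'M[Z]_2 :=
  if odd j then mx22 1 (- b j) 0 t else mx22 t (- b j) 0 1.

(* An isomorphism M(b) -> M(c): a family of invertible Z-linear maps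
   phi_i : Z^2 -> Z^2 (2x2 matrices over Z acting on column vectors)
   commuting with all arrows x_j : j-1 -> j and y_j : j -> j-1. *)
Definition Miso (b c : 'I_10 -> Z) : Prop :=
  exists phi : 'I_10 -> 'M[Z]_2,
    [/\ forall i, exists psi : 'M[Z]_2, phi i *m psi = 1%:M /\ psi *m phi i = 1%:M,
        forall j : 'I_10, phi j *m xmat b j = xmat c j *m phi (j - 1) &
        forall j : 'I_10, phi (j - 1) *m ymat b j = ymat c j *m phi j].

Definition Bsum (b : 'I_10 -> Z) (i : 'I_10) : Z := b i + b (i + 1).

(* Main.v *)
Require Import Defs.
From HB Require Import structures.
From mathcomp Require Import all_boot all_algebra.
From mathcomp Require Import boolp complex Rstruct.
From mathcomp Require Import ring.
Set Implicit Arguments.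
Unset Strict Implicit.
Local Open Scope ring_scope.
Import GRing.Theory.

Lemma coefM (f g : Z) n :
  coef (f * g) n = \sum_(j < n.+1) coef f j * coef g (n - j).
Proof. exact: coef_mul. Qed.

Definition ev (f : Z) : CC := coef f 0.
Lemma evD f g : ev (f + g) = ev f + ev g. Proof. by []. Qed.
Lemma evN f : ev (- f) = - ev f. Proof. by []. Qed.
Lemma evB f g : ev (f - g) = ev f - ev g. Proof. by []. Qed.
Lemma ev0 : ev 0 = 0. Proof. by []. Qed.
Lemma ev1 : ev 1 = 1. Proof. by []. Qed.
Lemma evM f g : ev (f * g) = ev f * ev g.
Proof. by rewrite /ev coefM big_ord_recl big_ord0 addr0. Qed.
Lemma evt : ev t = 0. Proof. by []. Qed.
Definition evE := (evD, evN, evB, evM, ev0, ev1, evt).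

Lemma coef_t0 g : coef (t * g) 0 = 0.
Proof. by rewrite -/(ev _) evM evt mul0r. Qed.
Lemma coef_tS g n : coef (t * g) n.+1 = coef g n.
Proof.
rewrite coefM big_ord_recl big_ord_recl big1 ?addr0; last first.
  by move=> j _; rewrite (_ : coef t _ = 0) ?mul0r.
rewrite (_ : coef t ord0 = 0) // (_ : coef t (lift ord0 ord0) = 1) //.
by rewrite mul0r add0r mul1r subn1.
Qed.

Lemma tK f g : t * f = t * g -> f = g.
Proof. by move=> h; apply: fpsP => n; rewrite -[coef f n]coef_tS -[coef g n]coef_tS h. Qed.

Definition tdiv (f : Z) : Z := FPS (fun n => coef f n.+1).
Lemma tdivP f : ev f = 0 -> f = t * tdiv f.
Proof.
move=> h; apply: fpsP => [[|n]]; first by rewrite coef_t0.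
by rewrite coef_tS.
Qed.

Lemma tdvdP f : tdvd f <-> ev f = 0.
Proof.
split; first by move=> [g ->]; rewrite evM evt mul0r.
by move=> /tdivP h; exists (tdiv f).
Qed.

Definition cst (a : CC) : Z := FPS (fun n => if n is 0 then a else 0).
Lemma evcst a : ev (cst a) = a. Proof. by []. Qed.
Lemma cstM a b : cst a * cst b = cst (a * b).
Proof.
apply: fpsP => n; rewrite coefM big_ord_recl subn0 big1 ?addr0.
  by case: n => //= n; rewrite mulr0.
by move=> j _; rewrite /= mul0r.
Qed.
Lemma cst1 : cst 1 = 1.
Proof. by apply: fpsP => [[|n]]. Qed.


Definition Er (F : fieldType) (bk gk p s rho : F) := gk * s - bk * (p + gk * rho).

Definition ResSys (F : fieldType) (b1 b3 b5 b7 b9 g1 g3 g5 g7 g9 : F) :=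
 exists p s rho, p * s != 0 /\
  [/\ Er b1 g1 p s rho = 0,
  Er b3 g3 (p + g1*rho) (s - b1*rho) rho = 0,
  Er b5 g5 (p + (g1+g3)*rho) (s - (b1+b3)*rho) rho = 0,
  Er b7 g7 (p + (g1+g3+g5)*rho) (s - (b1+b3+b5)*rho) rho = 0 &
  Er b9 g9 (p + (g1+g3+g5+g7)*rho) (s - (b1+b3+b5+b7)*rho) rho = 0].

Lemma ResSys_rot (F : fieldType) (b1 b3 b5 b7 b9 g1 g3 g5 g7 g9 : F) :
 
  b1 + b3 + b5 + b7 + b9 = 0 -> g1 + g3 + g5 + g7 + g9 = 0 ->
  ResSys b1 b3 b5 b7 b9 g1 g3 g5 g7 g9 -> ResSys b3 b5 b7 b9 b1 g3 g5 g7 g9 g1.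
Proof.
move=> hb hg [p [s [rho [nz [e1 e3 e5 e7 e9]]]]].
have hb9 : b9 = -(b1 + b3 + b5 + b7) by apply/eqP; rewrite -subr_eq0 opprK addrC hb.
have hg9 : g9 = -(g1 + g3 + g5 + g7) by apply/eqP; rewrite -subr_eq0 opprK addrC hg.
exists (p + g1 * rho), (s - b1 * rho), rho; split.
  have -> : (p + g1 * rho) * (s - b1 * rho) = p * s + rho * Er b1 g1 p s rho
    by rewrite /Er; ring.
  by rewrite e1 mulr0 addr0.
split.
- by rewrite -e3.
- by rewrite -e5; rewrite /Er; ring.
- by rewrite -e7; rewrite /Er; ring.
- by rewrite -e9; rewrite /Er; ring.
- by rewrite -e1; rewrite /Er hb9 hg9; ring.
Qed.

Lemma cramer3 (F : fieldType) (a1 b1 c1 a2 b2 c2 a3 b3 c3 x y z : F) :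
  a1 * x + b1 * y + c1 * z = 0 ->
  a2 * x + b2 * y + c2 * z = 0 ->
  a3 * x + b3 * y + c3 * z = 0 ->
  (a1 * (b2 * c3 - b3 * c2) - b1 * (a2 * c3 - a3 * c2) + c1 * (a2 * b3 - a3 * b2)) * x = 0.
Proof.
move=> h1 h2 h3.
transitivity ((b2 * c3 - b3 * c2) * (a1 * x + b1 * y + c1 * z)
  - (b1 * c3 - b3 * c1) * (a2 * x + b2 * y + c2 * z)
  + (b1 * c2 - b2 * c1) * (a3 * x + b3 * y + c3 * z)); first by ring.
by rewrite h1 h2 h3; ring.
Qed.

Lemma ResSys_alg (F : fieldType) (b1 b3 b5 b7 b9 g1 g3 g5 g7 g9 : F) :
 
  b1 + b3 + b5 + b7 + b9 = 0 -> g1 + g3 + g5 + g7 + g9 = 0 ->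
  b1 + b3 = 0 -> g1 + g3 = 0 ->
  b1 != 0 -> b5 != 0 -> g1 != 0 -> g5 != 0 ->
  b3 + b5 != 0 -> g3 + g5 != 0 ->
  (ResSys b1 b3 b5 b7 b9 g1 g3 g5 g7 g9 <->
   (b9 + b1) * g1 * b5 * g7 - (g9 + g1) * b1 * g5 * b7 = 0).
Proof.
move=> hb hg hb13 hg13 nb1 nb5 ng1 ng5 nb35 ng35.
have hb3 : b3 = - b1 by apply/eqP; rewrite -subr_eq0 opprK addrC hb13.
have hg3 : g3 = - g1 by apply/eqP; rewrite -subr_eq0 opprK addrC hg13.
have hb9 : b9 = -(b1 + b3 + b5 + b7) by apply/eqP; rewrite -subr_eq0 opprK addrC hb.
have hg9 : g9 = -(g1 + g3 + g5 + g7) by apply/eqP; rewrite -subr_eq0 opprK addrC hg.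
rewrite hb3 hg3 in nb35 ng35.
split.
- move=> [p [s [rho [nz [e1 e3 e5 e7 e9]]]]].
  move: e1 e5 e7; rewrite /Er hb3 hg3 => e1 e5 e7.
  have h1 : (- b1) * p + g1 * s + (- b1 * g1) * rho = 0 by rewrite -e1; ring.
  have h2 : (- b5) * p + g5 * s + (- b5 * g5) * rho = 0 by rewrite -e5; ring.
  have h3 : (- b7) * p + g7 * s + (- b7 * (g5 + g7) - g7 * b5) * rho = 0
    by rewrite -e7; ring.
  have := cramer3 h1 h2 h3.
  move/eqP; rewrite mulf_eq0 => /orP [/eqP hd|hp]; last first.
    by move: nz; rewrite (eqP hp) mul0r eqxx.
  rewrite hb9 hg9 hb3 hg3; rewrite -hd; ring.
- move=> hc.
  exists (g1 * g5 * (b1 - b5)), (b1 * b5 * (g1 - g5)), (g1 * b5 - b1 * g5).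
  split.
    rewrite !mulf_neq0 //.
      by rewrite subr_eq0; apply: contra nb35 => /eqP ->; rewrite addNr.
    by rewrite subr_eq0; apply: contra ng35 => /eqP ->; rewrite addNr.
  have E1 : Er b1 g1 (g1 * g5 * (b1 - b5)) (b1 * b5 * (g1 - g5)) (g1 * b5 - b1 * g5) = 0
    by rewrite /Er; ring.
  have E3 : Er b3 g3 (g1 * g5 * (b1 - b5) + g1 * (g1 * b5 - b1 * g5))
      (b1 * b5 * (g1 - g5) - b1 * (g1 * b5 - b1 * g5)) (g1 * b5 - b1 * g5) = 0
    by rewrite /Er hb3 hg3; ring.
  have E5 : Er b5 g5 (g1 * g5 * (b1 - b5) + (g1 + g3) * (g1 * b5 - b1 * g5))
      (b1 * b5 * (g1 - g5) - (b1 + b3) * (g1 * b5 - b1 * g5)) (g1 * b5 - b1 * g5) = 0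
    by rewrite /Er hb3 hg3; ring.
  have E7 : Er b7 g7 (g1 * g5 * (b1 - b5) + (g1 + g3 + g5) * (g1 * b5 - b1 * g5))
      (b1 * b5 * (g1 - g5) - (b1 + b3 + b5) * (g1 * b5 - b1 * g5)) (g1 * b5 - b1 * g5) = 0.
    rewrite -hc /Er hb9 hg9 hb3 hg3; ring.
  split => //.
  transitivity (- (Er b1 g1 (g1 * g5 * (b1 - b5)) (b1 * b5 * (g1 - g5)) (g1 * b5 - b1 * g5)
    + Er b3 g3 (g1 * g5 * (b1 - b5) + g1 * (g1 * b5 - b1 * g5))
      (b1 * b5 * (g1 - g5) - b1 * (g1 * b5 - b1 * g5)) (g1 * b5 - b1 * g5)
    + Er b5 g5 (g1 * g5 * (b1 - b5) + (g1 + g3) * (g1 * b5 - b1 * g5))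
      (b1 * b5 * (g1 - g5) - (b1 + b3) * (g1 * b5 - b1 * g5)) (g1 * b5 - b1 * g5)
    + Er b7 g7 (g1 * g5 * (b1 - b5) + (g1 + g3 + g5) * (g1 * b5 - b1 * g5))
      (b1 * b5 * (g1 - g5) - (b1 + b3 + b5) * (g1 * b5 - b1 * g5)) (g1 * b5 - b1 * g5))).
    by rewrite /Er hb9 hg9; ring.
  by rewrite E1 E3 E5 E7; ring.
Qed.
Lemma ResSys_rot_iff (F : fieldType) (b1 b3 b5 b7 b9 g1 g3 g5 g7 g9 : F) :
 
  b1 + b3 + b5 + b7 + b9 = 0 -> g1 + g3 + g5 + g7 + g9 = 0 ->
  (ResSys b1 b3 b5 b7 b9 g1 g3 g5 g7 g9 <-> ResSys b3 b5 b7 b9 b1 g3 g5 g7 g9 g1).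
Proof.
move=> hb hg; split; first exact: ResSys_rot.
have r (x1 x3 x5 x7 x9 : F) : x1 + x3 + x5 + x7 + x9 = 0 -> x3 + x5 + x7 + x9 + x1 = 0.
  by move=> h; rewrite -h; ring.
have rb1 := r _ _ _ _ _ hb; have rb2 := r _ _ _ _ _ rb1; have rb3 := r _ _ _ _ _ rb2.
have rb4 := r _ _ _ _ _ rb3.
have rg1 := r _ _ _ _ _ hg; have rg2 := r _ _ _ _ _ rg1; have rg3 := r _ _ _ _ _ rg2.
have rg4 := r _ _ _ _ _ rg3.
move=> h.
apply: (ResSys_rot rb4 rg4); apply: (ResSys_rot rb3 rg3); apply: (ResSys_rot rb2 rg2).
exact: (ResSys_rot rb1 rg1).
Qed.


Lemma mx22E (M : 'M[Z]_2) : M = mx22 (M 0 0) (M 0 1) (M 1 0) (M 1 1).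
Proof.
apply/matrixP => i j; rewrite /mx22 !mxE.
case: i => [[|[|i]] Hi] //; case: j => [[|[|j]] Hj] //=; by congr (M _ _); apply/val_inj.
Qed.

Lemma mx22M a b c d e f g h :
  mx22 a b c d *m mx22 e f g h
  = mx22 (a*e + b*g) (a*f + b*h) (c*e + d*g) (c*f + d*h).
Proof.
apply/matrixP => i j; rewrite !mxE !big_ord_recl big_ord0 addr0 !mxE /=.
by case: i => [[|[|i]] Hi]; case: j => [[|[|j]] Hj].
Qed.

Lemma mx22_inj a b c d a' b' c' d' :
  mx22 a b c d = mx22 a' b' c' d' -> [/\ a = a', b = b', c = c' & d = d'].
Proof.
move=> h.
have := congr1 (fun M : 'M[Z]_2 => M 0 0) h.
have := congr1 (fun M : 'M[Z]_2 => M 0 1) h.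
have := congr1 (fun M : 'M[Z]_2 => M 1 0) h.
have := congr1 (fun M : 'M[Z]_2 => M 1 1) h.
by rewrite /= !mxE /=.
Qed.

Lemma mx22_1 : (1%:M : 'M[Z]_2) = mx22 1 0 0 1.
Proof.
apply/matrixP => i j; rewrite !mxE.
by case: i => [[|[|i]] Hi]; case: j => [[|[|j]] Hj].
Qed.

Definition xo (b : Z) := mx22 t b 0 1.
Definition yo (b : Z) := mx22 1 (- b) 0 t.
Definition xe (b : Z) := mx22 1 b 0 t.
Definition ye (b : Z) := mx22 t (- b) 0 1.

Lemma from_eq (R : comPzRingType) (x y z : R) : x = y -> z = -(x - y) -> z = 0.
Proof. by move=> -> ->; rewrite subrr oppr0. Qed.
Lemma via_eq (R : comPzRingType) (x y z w : R) : x = y -> z - w = x - y -> z = w.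
Proof. by move=> -> /eqP; rewrite subrr subr_eq0 => /eqP. Qed.
Lemma via_eqN (R : comPzRingType) (x y z w : R) : x = y -> z - w = -(x - y) -> z = w.
Proof. by move=> -> /eqP; rewrite subrr oppr0 subr_eq0 => /eqP. Qed.
Lemma via_eqM (R : comPzRingType) (k x y z w : R) : x = y -> z - w = k * (x - y) -> z = w.
Proof. by move=> -> /eqP; rewrite subrr mulr0 subr_eq0 => /eqP. Qed.
Ltac via h := first [apply: (via_eq h); ring | apply: (via_eqN h); ring].

Lemma pair_ok (P Q R S b c b' c' n : Z) :
  (c + c') * S - (b + b') * P - (b + b') * (c + c') * R = t * n ->
  let M0 := mx22 P Q (t * R) S in
  let M1 := mx22 (P + c * R) (t * Q + c * S - (P + c * R) * b) R (S - R * b) in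
  let M2 := mx22 (P + (c + c') * R) (Q + n) (t * R) (S - (b + b') * R) in
  [/\ M1 *m xo b = xo c *m M0, M0 *m yo b = yo c *m M1,
      M2 *m xe b' = xe c' *m M1 & M1 *m ye b' = ye c' *m M2].
Proof.
move=> hn M0 M1 M2; rewrite /M0 /M1 /M2 /xo /yo /xe /ye !mx22M.
split; congr mx22; try ring; via hn.
Qed.

Lemma pair_det (P Q R S b c b' c' n : Z) :
  (c + c') * S - (b + b') * P - (b + b') * (c + c') * R = t * n ->
  (P + c * R) * (S - R * b) - (t * Q + c * S - (P + c * R) * b) * R
    = P * S - Q * (t * R) /\
  (P + (c + c') * R) * (S - (b + b') * R) - (Q + n) * (t * R)
    = P * S - Q * (t * R).
Proof.
move=> hn; split; first by ring.
by apply: (via_eqM (k := R) hn); ring.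
Qed.

Lemma inv22 a b c d u : a * d - b * c = cst u -> u != 0 ->
  exists psi, mx22 a b c d *m psi = 1%:M /\ psi *m mx22 a b c d = 1%:M.
Proof.
move=> hd hu; pose v := cst u^-1.
have hv : v * (a * d - b * c) = 1 by rewrite hd /v cstM mulVf // cst1.
exists (mx22 (v * d) (- (v * b)) (- (v * c)) (v * a)).
rewrite mx22_1 !mx22M; split; congr mx22; rewrite -?hv; ring.
Qed.

Lemma pair_ext (M0 M1 M2 : 'M[Z]_2) b c b' c' rho :
  M1 *m xo b = xo c *m M0 -> M2 *m xe b' = xe c' *m M1 -> M0 1 0 = t * rho ->
  [/\ M1 1 0 = rho, M2 1 0 = t * rho, M2 0 0 = M0 0 0 + (c + c') * rho,
      M2 1 1 = M0 1 1 - (b + b') * rho &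
      ev (c + c') * ev (M0 1 1) - ev (b + b') * (ev (M0 0 0) + ev (c + c') * ev rho) = 0].
Proof.
rewrite [M0]mx22E [M1]mx22E [M2]mx22E /xo /xe !mx22M !mxE /=.
set p := M0 0 0; set q := M0 0 1; set r := M0 1 0; set s := M0 1 1.
set P := M1 0 0; set Q := M1 0 1; set R := M1 1 0; set S := M1 1 1.
set P2 := M2 0 0; set Q2 := M2 0 1; set R2 := M2 1 0; set S2 := M2 1 1.
move=> /mx22_inj [e1 e2 e3 e4] /mx22_inj [f1 f2 f3 f4] hr.
rewrite ?mul0r ?mul1r ?mulr0 ?mulr1 ?add0r ?addr0 in e1 e2 e3 e4 f1 f2 f3 f4.
have hR : R = rho by apply: tK; rewrite -hr -e3; ring.
have hP : P = p + c * rho by apply: tK; rewrite mulrC e1 hr; ring.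
have hS : S = s - rho * b by rewrite -e4 hR; ring.
have hR2 : R2 = t * rho by rewrite f3 hR.
have hP2 : P2 = p + (c + c') * rho by rewrite f1 hP hR; ring.
have hS2 : S2 = s - (b + b') * rho.
  by rewrite hR2 hS in f4; apply: tK; via f4.
split => //.
have ea := congr1 ev f2; rewrite hP2 hS !evE mulr0 addr0 in ea.
have eb := congr1 ev e2; rewrite hP !evE mul0r add0r in eb.
have eQ : ev Q = ev c * ev s - (ev p + ev c * ev rho) * ev b by rewrite -eb; ring.
rewrite eQ in ea.
rewrite -/(ev c) -/(ev c') -/(ev b) -/(ev b').
by apply: (from_eq ea); ring.
Qed.

Lemma even_ext (M0 M9 : 'M[Z]_2) b c :
  M0 *m xe b = xe c *m M9 -> M0 1 0 = t * M9 1 0.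
Proof.
rewrite [M0]mx22E [M9]mx22E /xe !mx22M !mxE /= => /mx22_inj [_ _ e _].
by move: e; rewrite !mulr1 !mulr0 !addr0 !mul0r !add0r.
Qed.

Lemma inv_ext (M : 'M[Z]_2) :
  (exists psi, M *m psi = 1%:M /\ psi *m M = 1%:M) -> ev (M 1 0) = 0 ->
  ev (M 0 0) * ev (M 1 1) != 0.
Proof.
move=> [psi [h _]]; move: h; rewrite [M]mx22E [psi]mx22E mx22_1 mx22M !mxE /=.
move=> /mx22_inj [e1 e2 e3 e4] hc.
have := congr1 ev e1; have := congr1 ev e3; have := congr1 ev e4.
rewrite !evE hc !mul0r !add0r => h4 h3 h1.
have nd : ev (M 1 1) != 0 by apply: contra_eq_neq h4 => ->; rewrite mul0r eq_sym oner_eq0.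
have hg : ev (psi 1 0) = 0.
  by move/eqP: h3; rewrite mulf_eq0 (negPf nd) /= => /eqP.
rewrite hg mulr0 addr0 in h1.
rewrite mulf_neq0 //; apply: contra_eq_neq h1 => ->; rewrite mul0r eq_sym oner_eq0 //.
Qed.

Definition o (k : nat) : 'I_10 := k%:R.

Lemma I10_cases (P : 'I_10 -> Prop) :
  P (o 0) -> P (o 1) -> P (o 2) -> P (o 3) -> P (o 4) -> P (o 5) -> P (o 6) ->
  P (o 7) -> P (o 8) -> P (o 9) -> forall i, P i.
Proof.
move=> h0 h1 h2 h3 h4 h5 h6 h7 h8 h9 [[|[|[|[|[|[|[|[|[|[|i]]]]]]]]]] Hi];
 try (by move: Hi); 
 [move: h0|move: h1|move: h2|move: h3|move: h4|move: h5|move: h6|move: h7|move: h8|move: h9];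
 by congr P; apply/val_inj.
Qed.

Lemma valo k : (k < 10)%N -> val (o k) = k.
Proof. by move=> h; rewrite -[RHS](modn_small h); exact: (val_Zp_nat (isT : (1 < 10)%N) k). Qed.

Definition f10 (A : Type) (a0 a1 a2 a3 a4 a5 a6 a7 a8 a9 : A) (i : 'I_10) : A :=
  match val i with 0 => a0 | 1 => a1 | 2 => a2 | 3 => a3 | 4 => a4 | 5 => a5
  | 6 => a6 | 7 => a7 | 8 => a8 | _ => a9 end%N.


Lemma sum10 (f : 'I_10 -> Z) : \sum_(i < 10) f i =
  f (o 0) + f (o 1) + f (o 2) + f (o 3) + f (o 4) + f (o 5) + f (o 6) + f (o 7) + f (o 8) + f (o 9).
Proof.
rewrite (eq_bigr (fun i : 'I_10 => f (o i))); last first.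
  by move=> i _; congr f; apply/val_inj; rewrite valo.
rewrite -(big_mkord xpredT (fun i => f (o i))).
by rewrite unlock /= addr0 !addrA.
Qed.

Lemma xmat_odd b (j : 'I_10) : odd j -> xmat b j = xo (b j).
Proof. by rewrite /xmat => ->. Qed.
Lemma xmat_even b (j : 'I_10) : ~~ odd j -> xmat b j = xe (b j).
Proof. by rewrite /xmat => /negPf ->. Qed.
Lemma ymat_odd b (j : 'I_10) : odd j -> ymat b j = yo (b j).
Proof. by rewrite /ymat => ->. Qed.
Lemma ymat_even b (j : 'I_10) : ~~ odd j -> ymat b j = ye (b j).
Proof. by rewrite /ymat => /negPf ->. Qed.
Lemma oS k : o k.+1 - 1 = o k.
Proof. by rewrite /o mulrSr addrK. Qed.
Lemma o0m : o 0 - 1 = o 9. Proof. by apply/val_inj. Qed.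
Lemma o10 : o 10 = o 0. Proof. by apply/val_inj. Qed.
Lemma eq0_via (R : comPzRingType) (x z : R) : x = 0 -> z = x -> z = 0.
Proof. by move=> -> ->. Qed.

Definition be (b : 'I_10 -> Z) k := ev (b (o k)).

Lemma Miso_fwd b c : Miso b c ->
  ResSys (be b 1 + be b 2) (be b 3 + be b 4) (be b 5 + be b 6) (be b 7 + be b 8)
         (be b 9 + be b 0)
         (be c 1 + be c 2) (be c 3 + be c 4) (be c 5 + be c 6) (be c 7 + be c 8)
         (be c 9 + be c 0).
Proof.
move=> [phi [hinv hx _]].
have h0 := hx (o 0); rewrite o0m !xmat_even // in h0.
have h1 := hx (o 1); rewrite oS !xmat_odd // in h1.
have h2 := hx (o 2); rewrite oS !xmat_even // in h2.
have h3 := hx (o 3); rewrite oS !xmat_odd // in h3.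
have h4 := hx (o 4); rewrite oS !xmat_even // in h4.
have h5 := hx (o 5); rewrite oS !xmat_odd // in h5.
have h6 := hx (o 6); rewrite oS !xmat_even // in h6.
have h7 := hx (o 7); rewrite oS !xmat_odd // in h7.
have h8 := hx (o 8); rewrite oS !xmat_even // in h8.
have h9 := hx (o 9); rewrite oS !xmat_odd // in h9.
have r0 := even_ext h0.
have [r1 r2 p2 s2 E1] := pair_ext h1 h2 r0.
have [r3 r4 p4 s4 E3] := pair_ext h3 h4 r2.
have [r5 r6 p6 s6 E5] := pair_ext h5 h6 r4.
have [r7 r8 p8 s8 E7] := pair_ext h7 h8 r6.
have [r9 r10 p10 s10 E9] := pair_ext h9 h0 r8.
exists (ev (phi (o 0) 0 0)), (ev (phi (o 0) 1 1)), (ev (phi (o 9) 1 0)).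
split.
  by apply: inv_ext; [exact: hinv | rewrite r0 evM evt mul0r].
rewrite p8 p6 p4 p2 s8 s6 s4 s2 !evE in E3 E5 E7 E9.
rewrite !evE in E1.
split.
- by apply: (eq0_via E1); rewrite /Er /be; ring.
- by apply: (eq0_via E3); rewrite /Er /be; ring.
- by apply: (eq0_via E5); rewrite /Er /be; ring.
- by apply: (eq0_via E7); rewrite /Er /be; ring.
- by apply: (eq0_via E9); rewrite /Er /be; ring.
Qed.

Lemma Miso_bwd b c : \sum_(i < 10) b i = 0 -> \sum_(i < 10) c i = 0 ->
  ResSys (be b 1 + be b 2) (be b 3 + be b 4) (be b 5 + be b 6) (be b 7 + be b 8)
         (be b 9 + be b 0)
         (be c 1 + be c 2) (be c 3 + be c 4) (be c 5 + be c 6) (be c 7 + be c 8)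
         (be c 9 + be c 0) -> Miso b c.
Proof.
rewrite !sum10 => hb hc [p [s [rho [nz [E1 E3 E5 E7 E9]]]]].
set b0 := b (o 0) in hb *; set b1 := b (o 1) in hb *; set b2 := b (o 2) in hb *.
set b3 := b (o 3) in hb *; set b4 := b (o 4) in hb *; set b5 := b (o 5) in hb *.
set b6 := b (o 6) in hb *; set b7 := b (o 7) in hb *.
set b8 := b (o 8) in hb *; set b9 := b (o 9) in hb *.
set c0 := c (o 0) in hc *; set c1 := c (o 1) in hc *; set c2 := c (o 2) in hc *.
set c3 := c (o 3) in hc *; set c4 := c (o 4) in hc *; set c5 := c (o 5) in hc *.
set c6 := c (o 6) in hc *; set c7 := c (o 7) in hc *.
set c8 := c (o 8) in hc *; set c9 := c (o 9) in hc *.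
pose R := cst rho.
pose N (P S : Z) (x1 y1 x2 y2 : Z) :=
  (y1 + y2) * S - (x1 + x2) * P - (x1 + x2) * (y1 + y2) * R.
pose P0 := cst p; pose S0 := cst s; pose Q0 : Z := 0.
pose n1 := tdiv (N P0 S0 b1 c1 b2 c2).
pose P2 := P0 + (c1 + c2) * R; pose S2 := S0 - (b1 + b2) * R; pose Q2 := Q0 + n1.
pose n3 := tdiv (N P2 S2 b3 c3 b4 c4).
pose P4 := P2 + (c3 + c4) * R; pose S4 := S2 - (b3 + b4) * R; pose Q4 := Q2 + n3.
pose n5 := tdiv (N P4 S4 b5 c5 b6 c6).
pose P6 := P4 + (c5 + c6) * R; pose S6 := S4 - (b5 + b6) * R; pose Q6 := Q4 + n5.
pose n7 := tdiv (N P6 S6 b7 c7 b8 c8).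
pose P8 := P6 + (c7 + c8) * R; pose S8 := S6 - (b7 + b8) * R; pose Q8 := Q6 + n7.
pose n9 := tdiv (N P8 S8 b9 c9 b0 c0).
pose P10 := P8 + (c9 + c0) * R; pose S10 := S8 - (b9 + b0) * R; pose Q10 := Q8 + n9.
have hn1 : N P0 S0 b1 c1 b2 c2 = t * n1.
  apply: tdivP; apply: (eq0_via E1).
  by rewrite /N /P0 /S0 /R !evE !evcst /Er /be; ring.
have hn3 : N P2 S2 b3 c3 b4 c4 = t * n3.
  apply: tdivP; apply: (eq0_via E3).
  by rewrite /N /P2 /S2 /P0 /S0 /R !evE !evcst /Er /be; ring.
have hn5 : N P4 S4 b5 c5 b6 c6 = t * n5.
  apply: tdivP; apply: (eq0_via E5).
  by rewrite /N /P4 /S4 /P2 /S2 /P0 /S0 /R !evE !evcst /Er /be; ring.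
have hn7 : N P6 S6 b7 c7 b8 c8 = t * n7.
  apply: tdivP; apply: (eq0_via E7).
  by rewrite /N /P6 /S6 /P4 /S4 /P2 /S2 /P0 /S0 /R !evE !evcst /Er /be; ring.
have hn9 : N P8 S8 b9 c9 b0 c0 = t * n9.
  apply: tdivP; apply: (eq0_via E9).
  by rewrite /N /P8 /S8 /P6 /S6 /P4 /S4 /P2 /S2 /P0 /S0 /R !evE !evcst /Er /be; ring.
have eP : P10 = P0.
  by rewrite /P10 /P8 /P6 /P4 /P2; apply: (via_eqM (k := R) hc); ring.
have eS : S10 = S0.
  by rewrite /S10 /S8 /S6 /S4 /S2; apply: (via_eqM (k := - R) hb); ring.
have hb9 : b9 = -(b0 + b1 + b2 + b3 + b4 + b5 + b6 + b7 + b8).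
  by apply/eqP; rewrite -subr_eq0 opprK addrC hb.
have hc9 : c9 = -(c0 + c1 + c2 + c3 + c4 + c5 + c6 + c7 + c8).
  by apply/eqP; rewrite -subr_eq0 opprK addrC hc.
have eQ : Q10 = Q0.
  apply: tK; rewrite /Q10 /Q8 /Q6 /Q4 /Q2 !mulrDr -hn1 -hn3 -hn5 -hn7 -hn9.
  by rewrite /N /P8 /S8 /P6 /S6 /P4 /S4 /P2 /S2 /Q0 hb9 hc9; ring.
pose Mo (P Q S x y : Z) :=
  mx22 (P + y * R) (t * Q + y * S - (P + y * R) * x) R (S - R * x).
pose Me (P Q S : Z) := mx22 P Q (t * R) S.
pose phi := f10 (Me P0 Q0 S0) (Mo P0 Q0 S0 b1 c1) (Me P2 Q2 S2) (Mo P2 Q2 S2 b3 c3)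
  (Me P4 Q4 S4) (Mo P4 Q4 S4 b5 c5) (Me P6 Q6 S6) (Mo P6 Q6 S6 b7 c7)
  (Me P8 Q8 S8) (Mo P8 Q8 S8 b9 c9).
have e10 : mx22 (P8 + (c9 + c0) * R) (Q8 + n9) (t * R) (S8 - (b9 + b0) * R)
    = Me P0 Q0 S0 by rewrite /Me -eP -eQ -eS.
have [x1 y1 x2 y2] := @pair_ok P0 Q0 R S0 b1 c1 b2 c2 n1 hn1.
have [x3 y3 x4 y4] := @pair_ok P2 Q2 R S2 b3 c3 b4 c4 n3 hn3.
have [x5 y5 x6 y6] := @pair_ok P4 Q4 R S4 b5 c5 b6 c6 n5 hn5.
have [x7 y7 x8 y8] := @pair_ok P6 Q6 R S6 b7 c7 b8 c8 n7 hn7.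
have [x9 y9 x0 y0] := @pair_ok P8 Q8 R S8 b9 c9 b0 c0 n9 hn9.
rewrite e10 in x0 y0.
have d0 : P0 * S0 - Q0 * (t * R) = cst (p * s) by rewrite /Q0 mul0r subr0 cstM.
have [d1 d2] := @pair_det P0 Q0 R S0 b1 c1 b2 c2 n1 hn1.
rewrite d0 in d1 d2.
have d2' : P2 * S2 - Q2 * (t * R) = cst (p * s) := d2.
have [d3 d4] := @pair_det P2 Q2 R S2 b3 c3 b4 c4 n3 hn3.
rewrite d2' in d3 d4.
have d4' : P4 * S4 - Q4 * (t * R) = cst (p * s) := d4.
have [d5 d6] := @pair_det P4 Q4 R S4 b5 c5 b6 c6 n5 hn5.
rewrite d4' in d5 d6.
have d6' : P6 * S6 - Q6 * (t * R) = cst (p * s) := d6.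
have [d7 d8] := @pair_det P6 Q6 R S6 b7 c7 b8 c8 n7 hn7.
rewrite d6' in d7 d8.
have d8' : P8 * S8 - Q8 * (t * R) = cst (p * s) := d8.
have [d9 _] := @pair_det P8 Q8 R S8 b9 c9 b0 c0 n9 hn9.
rewrite d8' in d9.
exists phi; split.
- apply: I10_cases.
  + exact: (inv22 d0 nz).
  + exact: (inv22 d1 nz).
  + exact: (inv22 d2' nz).
  + exact: (inv22 d3 nz).
  + exact: (inv22 d4' nz).
  + exact: (inv22 d5 nz).
  + exact: (inv22 d6' nz).
  + exact: (inv22 d7 nz).
  + exact: (inv22 d8' nz).
  + exact: (inv22 d9 nz).
- apply: I10_cases.
  + by rewrite o0m !xmat_even //; exact: x0.
  + by rewrite oS !xmat_odd //; exact: x1.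
  + by rewrite oS !xmat_even //; exact: x2.
  + by rewrite oS !xmat_odd //; exact: x3.
  + by rewrite oS !xmat_even //; exact: x4.
  + by rewrite oS !xmat_odd //; exact: x5.
  + by rewrite oS !xmat_even //; exact: x6.
  + by rewrite oS !xmat_odd //; exact: x7.
  + by rewrite oS !xmat_even //; exact: x8.
  + by rewrite oS !xmat_odd //; exact: x9.
- apply: I10_cases.
  + by rewrite o0m !ymat_even //; exact: y0.
  + by rewrite oS !ymat_odd //; exact: y1.
  + by rewrite oS !ymat_even //; exact: y2.
  + by rewrite oS !ymat_odd //; exact: y3.
  + by rewrite oS !ymat_even //; exact: y4.
  + by rewrite oS !ymat_odd //; exact: y5.
  + by rewrite oS !ymat_even //; exact: y6.
  + by rewrite oS !ymat_odd //; exact: y7.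
  + by rewrite oS !ymat_even //; exact: y8.
  + by rewrite oS !ymat_odd //; exact: y9.
Qed.

Lemma BsumE (b : 'I_10 -> Z) k : ev (Bsum b (o k)) = be b k + be b k.+1.
Proof. by rewrite /Bsum evD /be /o mulrSr. Qed.
Lemma evDD (b b' : 'I_10 -> Z) x y :
  ev (Bsum b x + Bsum b' y) = ev (Bsum b x) + ev (Bsum b' y).
Proof. exact: evD. Qed.
Lemma be10 (b : 'I_10 -> Z) : be b 10 = be b 0.
Proof. by rewrite /be o10. Qed.
Lemma ntd f : ~ tdvd f -> ev f != 0.
Proof. by move=> h; apply/eqP => /tdvdP. Qed.
Lemma sumev (b : 'I_10 -> Z) : \sum_(i < 10) b i = 0 ->
  (be b 1 + be b 2) + (be b 3 + be b 4) + (be b 5 + be b 6) + (be b 7 + be b 8)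
  + (be b 9 + be b 0) = 0.
Proof. by rewrite sum10 => /(congr1 ev); rewrite !evE /be => h; rewrite -h; ring. Qed.

Unset Implicit Arguments.
Theorem theorem2p8 (b c : 'I_10 -> Z) :
  \sum_(i < 10) b i = 0 ->
  \sum_(i < 10) c i = 0 ->
  (forall i : 'I_10, odd i -> ~ tdvd (Bsum b i)) ->
  (forall i : 'I_10, odd i -> ~ tdvd (Bsum c i)) ->
  forall l : 'I_10, odd l ->
  tdvd (Bsum b l + Bsum b (l + 2%:R)) ->
  (forall i : 'I_10, odd i -> i != l -> ~ tdvd (Bsum b i + Bsum b (i + 2%:R))) ->
  tdvd (Bsum c l + Bsum c (l + 2%:R)) ->
  (forall i : 'I_10, odd i -> i != l -> ~ tdvd (Bsum c i + Bsum c (i + 2%:R))) ->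
  (Miso b c <->
   tdvd ((Bsum b (l - 2%:R) + Bsum b l) * Bsum c l * Bsum b (l + 4%:R)
           * Bsum c (l + 6%:R)
         - (Bsum c (l - 2%:R) + Bsum c l) * Bsum b l * Bsum c (l + 4%:R)
           * Bsum b (l + 6%:R))).
Proof.
move=> hb hc nB nC.
have key := conj (@Miso_fwd b c) (Miso_bwd hb hc).
have sb := sumev hb; have sc := sumev hc.
have nb k : odd (o k) -> be b k + be b k.+1 != 0.
  by move=> h; rewrite -BsumE; apply: ntd; apply: nB.
have nc k : odd (o k) -> be c k + be c k.+1 != 0.
  by move=> h; rewrite -BsumE; apply: ntd; apply: nC.
have nb9 : be b 9 + be b 0 != 0 by rewrite -be10; apply: nb.
have nc9 : be c 9 + be c 0 != 0 by rewrite -be10; apply: nc.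
apply: I10_cases => //.
- move=> _ hBl nBi hCl nCi.
  rewrite (_ : o 1 - 2%:R = o 9); last by apply/val_inj.
  rewrite (_ : o 1 + 4%:R = o 5); last by apply/val_inj.
  rewrite (_ : o 1 + 6%:R = o 7); last by apply/val_inj.
  rewrite (_ : o 1 + 2%:R = o 3) in hBl hCl; last by apply/val_inj.
  have n2b := nBi (o 3) isT isT; have n2c := nCi (o 3) isT isT.
  rewrite (_ : o 3 + 2%:R = o 5) in n2b n2c; last by apply/val_inj.
  move/ntd: n2b; move/ntd: n2c; move/tdvdP: hBl; move/tdvdP: hCl.
  rewrite ?evB ?evM ?evDD !BsumE ?be10 => hCl hBl n2c n2b.
  apply: (iff_trans _ (iff_sym (tdvdP _))); rewrite ?evB ?evM ?evDD !BsumE ?be10.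
  apply: (iff_trans key).
  apply: (ResSys_alg _ _ hBl hCl (nb 1 isT) (nb 5 isT) (nc 1 isT) (nc 5 isT) n2b n2c).
  + by rewrite -sb; ring.
  + by rewrite -sc; ring.
- move=> _ hBl nBi hCl nCi.
  rewrite (_ : o 3 - 2%:R = o 1); last by apply/val_inj.
  rewrite (_ : o 3 + 4%:R = o 7); last by apply/val_inj.
  rewrite (_ : o 3 + 6%:R = o 9); last by apply/val_inj.
  rewrite (_ : o 3 + 2%:R = o 5) in hBl hCl; last by apply/val_inj.
  have n2b := nBi (o 5) isT isT; have n2c := nCi (o 5) isT isT.
  rewrite (_ : o 5 + 2%:R = o 7) in n2b n2c; last by apply/val_inj.
  move/ntd: n2b; move/ntd: n2c; move/tdvdP: hBl; move/tdvdP: hCl.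
  rewrite ?evB ?evM ?evDD !BsumE ?be10 => hCl hBl n2c n2b.
  apply: (iff_trans _ (iff_sym (tdvdP _))); rewrite ?evB ?evM ?evDD !BsumE ?be10.
  apply: (iff_trans key).
  apply: (iff_trans (ResSys_rot_iff _ _)); [by rewrite -sb; ring | by rewrite -sc; ring |].
  apply: (ResSys_alg _ _ hBl hCl (nb 3 isT) (nb 7 isT) (nc 3 isT) (nc 7 isT) n2b n2c).
  + by rewrite -sb; ring.
  + by rewrite -sc; ring.
- move=> _ hBl nBi hCl nCi.
  rewrite (_ : o 5 - 2%:R = o 3); last by apply/val_inj.
  rewrite (_ : o 5 + 4%:R = o 9); last by apply/val_inj.
  rewrite (_ : o 5 + 6%:R = o 1); last by apply/val_inj.
  rewrite (_ : o 5 + 2%:R = o 7) in hBl hCl; last by apply/val_inj.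
  have n2b := nBi (o 7) isT isT; have n2c := nCi (o 7) isT isT.
  rewrite (_ : o 7 + 2%:R = o 9) in n2b n2c; last by apply/val_inj.
  move/ntd: n2b; move/ntd: n2c; move/tdvdP: hBl; move/tdvdP: hCl.
  rewrite ?evB ?evM ?evDD !BsumE ?be10 => hCl hBl n2c n2b.
  apply: (iff_trans _ (iff_sym (tdvdP _))); rewrite ?evB ?evM ?evDD !BsumE ?be10.
  apply: (iff_trans key).
  apply: (iff_trans (ResSys_rot_iff _ _)); [by rewrite -sb; ring | by rewrite -sc; ring |].
  apply: (iff_trans (ResSys_rot_iff _ _)); [by rewrite -sb; ring | by rewrite -sc; ring |].
  apply: (ResSys_alg _ _ hBl hCl (nb 5 isT) nb9 (nc 5 isT) nc9 n2b n2c).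
  + by rewrite -sb; ring.
  + by rewrite -sc; ring.
- move=> _ hBl nBi hCl nCi.
  rewrite (_ : o 7 - 2%:R = o 5); last by apply/val_inj.
  rewrite (_ : o 7 + 4%:R = o 1); last by apply/val_inj.
  rewrite (_ : o 7 + 6%:R = o 3); last by apply/val_inj.
  rewrite (_ : o 7 + 2%:R = o 9) in hBl hCl; last by apply/val_inj.
  have n2b := nBi (o 9) isT isT; have n2c := nCi (o 9) isT isT.
  rewrite (_ : o 9 + 2%:R = o 1) in n2b n2c; last by apply/val_inj.
  move/ntd: n2b; move/ntd: n2c; move/tdvdP: hBl; move/tdvdP: hCl.
  rewrite ?evB ?evM ?evDD !BsumE ?be10 => hCl hBl n2c n2b.
  apply: (iff_trans _ (iff_sym (tdvdP _))); rewrite ?evB ?evM ?evDD !BsumE ?be10.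
  apply: (iff_trans key).
  apply: (iff_trans (ResSys_rot_iff _ _)); [by rewrite -sb; ring | by rewrite -sc; ring |].
  apply: (iff_trans (ResSys_rot_iff _ _)); [by rewrite -sb; ring | by rewrite -sc; ring |].
  apply: (iff_trans (ResSys_rot_iff _ _)); [by rewrite -sb; ring | by rewrite -sc; ring |].
  apply: (ResSys_alg _ _ hBl hCl (nb 7 isT) (nb 1 isT) (nc 7 isT) (nc 1 isT) n2b n2c).
  + by rewrite -sb; ring.
  + by rewrite -sc; ring.
- move=> _ hBl nBi hCl nCi.
  rewrite (_ : o 9 - 2%:R = o 7); last by apply/val_inj.
  rewrite (_ : o 9 + 4%:R = o 3); last by apply/val_inj.
  rewrite (_ : o 9 + 6%:R = o 5); last by apply/val_inj.
  rewrite (_ : o 9 + 2%:R = o 1) in hBl hCl; last by apply/val_inj.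
  have n2b := nBi (o 1) isT isT; have n2c := nCi (o 1) isT isT.
  rewrite (_ : o 1 + 2%:R = o 3) in n2b n2c; last by apply/val_inj.
  move/ntd: n2b; move/ntd: n2c; move/tdvdP: hBl; move/tdvdP: hCl.
  rewrite ?evB ?evM ?evDD !BsumE ?be10 => hCl hBl n2c n2b.
  apply: (iff_trans _ (iff_sym (tdvdP _))); rewrite ?evB ?evM ?evDD !BsumE ?be10.
  apply: (iff_trans key).
  apply: (iff_trans (ResSys_rot_iff _ _)); [by rewrite -sb; ring | by rewrite -sc; ring |].
  apply: (iff_trans (ResSys_rot_iff _ _)); [by rewrite -sb; ring | by rewrite -sc; ring |].
  apply: (iff_trans (ResSys_rot_iff _ _)); [by rewrite -sb; ring | by rewrite -sc; ring |].
  apply: (iff_trans (ResSys_rot_iff _ _)); [by rewrite -sb; ring | by rewrite -sc; ring |].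
  apply: (ResSys_alg _ _ hBl hCl nb9 (nb 3 isT) nc9 (nc 3 isT) n2b n2c).
  + by rewrite -sb; ring.
  + by rewrite -sc; ring.
Qed.
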